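(* Every basis $B$ for $\mathbb{Z}$ can be written in the form $B=\{d_1,\,2d_2,\,2^2d_3,\,2^3d_4,\dots\}$, where all the integers $d_1,d_2,\dots$ are odd. Equivalently, for every $j\ge 0$, $B$ contains exactly one element $b$ such that $2^j$ divides $b$ and $2^{j+1}$ does not divide $b$, and $B$ contains no other elements.
   Context: A set of integers $B=\{b_1,b_2,\dots\}$, with the $b_i$ pairwise distinct, is a basis for $\mathbb{Z}$ if every $x\in\mathbb{Z}$ can be written in exactly one way as $x=\sum_{i\ge1}\epsilon_i b_i$ with every $\epsilon_i\in\{0,1\}$ and $\sum_i\epsilon_i<\infty$. *)

(* Defs.v *)
From Stdlib Require Import ZArith List.
Open Scope Z_scope.

Definition zsum (l : list Z) : Z := fold_right Z.add 0 l.

(* A finite subset S of B (given as a duplicate-free list) representing x,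
   i.e. x = sum of the elements of S (eps_i = 1 exactly for b_i in S). *)
Definition represents (B : Z -> Prop) (S : list Z) (x : Z) : Prop :=
  NoDup S /\ (forall b, In b S -> B b) /\ zsum S = x.

(* B (a set of integers, so its elements are pairwise distinct) is a basis
   for Z: every integer x is a finite subset-sum of B in exactly one way
   (two representing subsets have the same elements). *)
Definition is_basis (B : Z -> Prop) : Prop :=
  forall x : Z,
    (exists S, represents B S x) /\
    (forall S T, represents B S x -> represents B T x ->
                 forall b, In b S <-> In b T).

(* Main.v *)
Require Import Defs.
From Stdlib Require Import ZArith List Lia ClassicalEpsilon FinFun.
Open Scope Z_scope.

Lemma rep_eq B S y y' : represents B S y -> y = y' -> represents B S y'.
Proof. intros H ->; exact H. Qed.

Lemma rep_add B T y c : represents B T y -> ~ In c T -> B c -> represents B (c::T) (y + c).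
Proof. intros [H1 [H2 H3]] Hn Hc. split; [constructor; auto|split].
 - intros z [<-|Hz]; auto.
 - simpl. lia. Qed.

Lemma zsum_remove S c : NoDup S -> In c S -> zsum S = c + zsum (remove Z.eq_dec c S).
Proof. induction S as [|x S IH]; simpl; intros Hd Hi; [contradiction|].
 inversion Hd; subst. destruct (Z.eq_dec c x) as [e|e].
 - subst. rewrite notin_remove by auto. lia.
 - destruct Hi as [Hi|Hi]; [congruence|]. simpl. rewrite (IH H2 Hi). lia. Qed.

Lemma NoDup_remove' S c : NoDup S -> NoDup (remove Z.eq_dec c S).
Proof. induction S as [|x S IH]; simpl; intros Hd; [constructor|].
 inversion Hd; subst. destruct (Z.eq_dec c x); auto.
 constructor; auto. intro Hin. apply in_remove in Hin. tauto. Qed.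

Lemma rep_remove B S x c : represents B S x -> In c S ->
  represents B (remove Z.eq_dec c S) (x - c).
Proof. intros [H1 [H2 H3]] Hc. split; [apply NoDup_remove'; auto|split].
 - intros z Hz. apply in_remove in Hz. apply H2; tauto.
 - rewrite (zsum_remove S c H1 Hc) in H3. lia. Qed.

Lemma rep_uniq B (hB : is_basis B) x S T : represents B S x -> represents B T x ->
  forall z, In z S <-> In z T.
Proof. intros HS HT. exact (proj2 (hB x) S T HS HT). Qed.

Lemma basis_no0 B (hB : is_basis B) : ~ B 0.
Proof. intro H0.
 assert (R1 : represents B nil 0) by (split; [constructor|split; [intros b []|reflexivity]]).
 assert (R2 : represents B (0::nil) 0) by (split; [repeat constructor; simpl; tauto|split; [intros b [<-|[]]; auto|reflexivity]]).
 pose proof (rep_uniq B hB 0 _ _ R1 R2 0). simpl in H. tauto. Qed.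

Lemma zsum_even S : (forall b, In b S -> Z.Even b) -> Z.Even (zsum S).
Proof. induction S as [|x S IH]; simpl; intros H.
 - exists 0; reflexivity.
 - destruct (H x (or_introl eq_refl)) as [p Hp]. destruct IH as [q Hq]; [intros; apply H; auto|].
   exists (p+q). lia. Qed.

Lemma basis_odd B (hB : is_basis B) : exists o, B o /\ Z.Odd o.
Proof. destruct (proj1 (hB 1)) as [S [H1 [H2 H3]]].
 destruct (classic (exists o, In o S /\ Z.Odd o)) as [[o [Ho Hoo]]|Hn].
 - exists o; auto.
 - exfalso. assert (Z.Even (zsum S)).
   { apply zsum_even. intros b Hb. destruct (Z.Even_or_Odd b); auto. exfalso; eauto. }
   rewrite H3 in H. destruct H as [p Hp]; lia. Qed.

Definition Dab (B : Z -> Prop) a b y := exists T, represents B T y /\ ~ In a T /\ ~ In b T.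

Definition cz (e : bool) c := if e then c else 0.

Lemma Dchar B (hB : is_basis B) a b (Ha : B a) (Hb : B b) (Hab : a <> b) x S
  (HS : represents B S x) ea eb :
  Dab B a b (x - cz ea a - cz eb b) <-> ((In a S <-> ea = true) /\ (In b S <-> eb = true)).
Proof. split.
 - intros [T [HT [naT nbT]]].
   destruct ea, eb; simpl in *.
   + assert (R1 := rep_add _ _ _ _ HT nbT Hb).
     assert (R2 : represents B (a::b::T) x).
     { apply (rep_eq _ _ (x - a - b + b + a)); [apply rep_add; auto|lia]. simpl; intros [->|?]; tauto. }
     pose proof (rep_uniq B hB x _ _ HS R2). rewrite (H a), (H b). simpl. tauto.
   + assert (R2 : represents B (a::T) x) by (apply (rep_eq _ _ (x - a + 0 + a)); [apply rep_add; auto|lia]).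
     pose proof (rep_uniq B hB x _ _ HS R2). rewrite (H a), (H b). simpl.
     split; split; intros; try tauto; try discriminate. all: try (destruct H0; [congruence|tauto]).
   + assert (R2 : represents B (b::T) x) by (apply (rep_eq _ _ (x - 0 - b + b)); [apply rep_add; auto|lia]).
     pose proof (rep_uniq B hB x _ _ HS R2). rewrite (H a), (H b). simpl.
     split; split; intros; try tauto; try discriminate. all: try (destruct H0; [congruence|tauto]).
   + assert (R2 : represents B T x) by (eapply rep_eq; [eauto|lia]).
     pose proof (rep_uniq B hB x _ _ HS R2). rewrite (H a), (H b).
     split; split; intros; try tauto; try discriminate.
 - intros [Ea Eb].
   destruct ea, eb; simpl.
   + assert (Ia : In a S) by tauto. assert (Ib : In b S) by tauto.
     assert (R1 := rep_remove _ _ _ _ HS Ia).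
     assert (Ib' : In b (remove Z.eq_dec a S)) by (apply in_in_remove; auto).
     assert (R2 := rep_remove _ _ _ _ R1 Ib').
     exists (remove Z.eq_dec b (remove Z.eq_dec a S)). split; [eapply rep_eq; [exact R2|lia]|split].
     * intro H. apply in_remove in H as [H _]. apply in_remove in H. tauto.
     * apply remove_In.
   + assert (Ia : In a S) by tauto. assert (Ib : ~ In b S) by (intro H; apply Eb in H; discriminate).
     exists (remove Z.eq_dec a S). split; [eapply rep_eq; [apply rep_remove; eauto|lia]|split].
     * apply remove_In.
     * intro H. apply in_remove in H. tauto.
   + assert (Ia : ~ In a S) by (intro H; apply Ea in H; discriminate). assert (Ib : In b S) by tauto.
     exists (remove Z.eq_dec b S). split; [eapply rep_eq; [apply rep_remove; eauto|lia]|split].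
     * intro H. apply in_remove in H. tauto.
     * apply remove_In.
   + assert (Ia : ~ In a S) by (intro H; apply Ea in H; discriminate).
     assert (Ib : ~ In b S) by (intro H; apply Eb in H; discriminate).
     exists S. split; [eapply rep_eq; [eauto|lia]|auto].
Qed.

Definition fab B a b y : Z := if excluded_middle_informative (Dab B a b y) then 1 else 0.

Definition inb (c : Z) S : bool := if in_dec Z.eq_dec c S then true else false.

Lemma Fval B (hB : is_basis B) a b (Ha : B a) (Hb : B b) (Hab : a <> b) x S
  (HS : represents B S x) ea eb :
  fab B a b (x - cz ea a - cz eb b) =
  if (Bool.eqb ea (inb a S) && Bool.eqb eb (inb b S))%bool then 1 else 0.
Proof. pose proof (Dchar B hB a b Ha Hb Hab x S HS ea eb) as H.
 unfold fab, inb. destruct (excluded_middle_informative _) as [d|d];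
 destruct ea, eb, (in_dec Z.eq_dec a S), (in_dec Z.eq_dec b S); simpl; auto.
 all: first [ exfalso; apply H in d; destruct d as [[d1 d2] [d3 d4]];
     repeat match goal with h: true = true -> ?P |- _ => specialize (h eq_refl) end;
     repeat match goal with h : ?P -> false = true, p : ?P |- _ => discriminate (h p) end; tauto
   | exfalso; apply d, H; split; split; intros; try tauto; try discriminate; tauto ].
Qed.

Lemma F1 B (hB : is_basis B) a b (Ha : B a) (Hb : B b) (Hab : a <> b) x :
  fab B a b x + fab B a b (x - a) + fab B a b (x - b) + fab B a b (x - a - b) = 1.
Proof. destruct (proj1 (hB x)) as [S HS].
 pose proof (Fval B hB a b Ha Hb Hab x S HS false false) as E1.
 pose proof (Fval B hB a b Ha Hb Hab x S HS true false) as E2.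
 pose proof (Fval B hB a b Ha Hb Hab x S HS false true) as E3.
 pose proof (Fval B hB a b Ha Hb Hab x S HS true true) as E4.
 simpl in *. replace (x - 0 - 0) with x in E1 by ring.
 replace (x - a - 0) with (x - a) in E2 by ring.
 replace (x - 0 - b) with (x - b) in E3 by ring.
 rewrite E1, E2, E3, E4. destruct (inb a S), (inb b S); reflexivity. Qed.

Definition Mc (B : Z -> Prop) c x := forall S, represents B S x -> In c S.

Lemma Mc_iff B (hB : is_basis B) c x S : represents B S x -> (Mc B c x <-> In c S).
Proof. intros HS. split; [intros H; apply H; auto|].
 intros Hi T HT. apply (rep_uniq B hB x S T HS HT); auto. Qed.

Lemma Mflip B (hB : is_basis B) c (Hc : B c) x : Mc B c x <-> ~ Mc B c (x - c).
Proof. destruct (proj1 (hB x)) as [S HS]. destruct (proj1 (hB (x - c))) as [T HT].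
 rewrite (Mc_iff B hB c x S HS), (Mc_iff B hB c _ T HT). split.
 - intros Hi HiT. pose proof (rep_remove _ _ _ _ HS Hi) as R.
   pose proof (rep_uniq B hB _ _ _ R HT c). apply H in HiT. apply remove_In in HiT; auto.
 - intros Hn. assert (R : represents B (c::T) x) by (apply (rep_eq _ _ (x - c + c)); [apply rep_add; auto|lia]).
   apply (rep_uniq B hB x _ _ HS R). simpl; auto. Qed.

Lemma M2 B (hB : is_basis B) c (Hc : B c) x : Mc B c (x + 2*c) <-> Mc B c x.
Proof. rewrite (Mflip B hB c Hc (x + 2*c)). rewrite (Mflip B hB c Hc (x + 2*c - c)).
 replace (x + 2 * c - c - c) with x by ring. split; [apply NNPP|tauto]. Qed.

Lemma periodic_Z (P : Z -> Prop) p : (forall x, P (x + p) <-> P x) -> forall k x, P (x + p*k) <-> P x.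
Proof. intros H k. induction k using Z.peano_ind; intros x.
 - rewrite Z.mul_0_r, Z.add_0_r. tauto.
 - replace (x + p * Z.succ k) with ((x + p*k) + p) by ring. rewrite H. apply IHk.
 - replace (x + p * Z.pred k) with ((x - p) + p*k) by (unfold Z.pred; ring). rewrite IHk.
   rewrite <- (H (x - p)). replace (x - p + p) with x by ring. tauto. Qed.

Lemma D_M B (hB : is_basis B) a b x : Dab B a b x <-> ~ Mc B a x /\ ~ Mc B b x.
Proof. destruct (proj1 (hB x)) as [S HS].
 rewrite (Mc_iff B hB a x S HS), (Mc_iff B hB b x S HS). split.
 - intros [T [HT [na nb]]]. rewrite (rep_uniq B hB x S T HS HT a), (rep_uniq B hB x S T HS HT b). auto.
 - intros [na nb]. exists S. auto. Qed.

Lemma f_periodic B (hB : is_basis B) a b (Ha : B a) (Hb : B b) x :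
  fab B a b (x + 2*(a*b)*(a*b)) = fab B a b x.
Proof. assert (E : Dab B a b (x + 2*(a*b)*(a*b)) <-> Dab B a b x).
 { rewrite !D_M by auto.
   replace (x + 2*(a*b)*(a*b)) with (x + (2*a)*(a*b*b)) at 1 by ring.
   rewrite (periodic_Z (Mc B a) (2*a) (M2 B hB a Ha)).
   replace (x + 2*(a*b)*(a*b)) with (x + (2*b)*(a*a*b)) by ring.
   rewrite (periodic_Z (Mc B b) (2*b) (M2 B hB b Hb)). tauto. }
 unfold fab. destruct (excluded_middle_informative _), (excluded_middle_informative _); tauto. Qed.

Fixpoint sumZ (g : Z -> Z) (n : nat) : Z :=
  match n with O => 0 | S n => sumZ g n + g (Z.of_nat n) end.

Lemma sumZ_ext g h n : (forall x, g x = h x) -> sumZ g n = sumZ h n.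
Proof. intros H; induction n; simpl; auto. rewrite IHn, H; auto. Qed.

Lemma sumZ_add g h n : sumZ (fun x => g x + h x) n = sumZ g n + sumZ h n.
Proof. induction n; simpl; auto. rewrite IHn. ring. Qed.

Lemma sumZ_one n : sumZ (fun _ => 1) n = Z.of_nat n.
Proof. induction n; simpl; auto. rewrite IHn. lia. Qed.

Lemma sumZ_s1 g n : sumZ (fun x => g (x + 1)) n = sumZ g n - g 0 + g (Z.of_nat n).
Proof. induction n as [|n IHn]; [simpl; ring|]. cbn [sumZ]. rewrite IHn.
 replace (Z.of_nat n + 1) with (Z.of_nat (S n)) by lia. ring. Qed.

Lemma sumZ_shift g n : (forall x, g (x + Z.of_nat n) = g x) ->
  forall c, sumZ (fun x => g (x + c)) n = sumZ g n.
Proof. intros Hp c. induction c using Z.peano_ind.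
 - apply sumZ_ext. intros; rewrite Z.add_0_r; auto.
 - rewrite <- IHc. rewrite <- (sumZ_ext (fun x => g (x + 1 + c))) by (intros; f_equal; unfold Z.succ; ring).
   rewrite (sumZ_s1 (fun x => g (x + c))).
   replace (Z.of_nat n + c) with (c + Z.of_nat n) by ring. rewrite Hp. simpl. replace (0 + c) with c by ring. ring.
 - rewrite <- IHc. rewrite <- (sumZ_ext (fun x => g (x + 1 + Z.pred c)) (fun x => g (x + c))) by (intros; f_equal; unfold Z.pred; ring).
   rewrite (sumZ_s1 (fun x => g (x + Z.pred c))).
   replace (Z.of_nat n + Z.pred c) with (Z.pred c + Z.of_nat n) by ring. rewrite Hp. simpl.
   replace (0 + Z.pred c) with (Z.pred c) by ring. ring.
Qed.

Lemma odd_unique B (hB : is_basis B) a b : B a -> B b -> Z.Odd a -> Z.Odd b -> a = b.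
Proof. intros Ha Hb Oa Ob. destruct (Z.eq_dec a b) as [|Hab]; auto. exfalso.
 set (N := 2*(a*b)*(a*b)).
 assert (HN : 0 <= N) by (unfold N; nia).
 set (n := Z.to_nat N).
 assert (En : Z.of_nat n = N) by (unfold n; lia).
 set (f := fab B a b).
 assert (Hp : forall x, f (x + Z.of_nat n) = f x) by (intros; rewrite En; apply f_periodic; auto).
 assert (S1 : sumZ (fun x => f x + f (x - a) + f (x - b) + f (x - a - b)) n = N).
 { rewrite <- En, <- sumZ_one. apply sumZ_ext. intros; apply F1; auto. }
 rewrite !sumZ_add in S1.
 rewrite (sumZ_ext (fun x => f (x - a)) (fun x => f (x + - a))) in S1 by (intros; f_equal; ring).
 rewrite (sumZ_ext (fun x => f (x - b)) (fun x => f (x + - b))) in S1 by (intros; f_equal; ring).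
 rewrite (sumZ_ext (fun x => f (x - a - b)) (fun x => f (x + (- a - b)))) in S1 by (intros; f_equal; ring).
 rewrite !(sumZ_shift f n Hp) in S1.
 assert (O1 : Z.odd (a*b*(a*b)) = true).
 { rewrite !Z.odd_mul. apply Z.odd_spec in Oa. apply Z.odd_spec in Ob. rewrite Oa, Ob. reflexivity. }
 assert (E : a*b*(a*b) = 2 * sumZ f n) by (unfold N in S1; lia).
 rewrite E, Z.odd_mul in O1. discriminate. Qed.

Lemma even_map S : (forall c, In c S -> Z.Even c) -> exists S', S = map (Z.mul 2) S'.
Proof. induction S as [|x S IH]; intros H; [exists nil; auto|].
 destruct (H x (or_introl eq_refl)) as [p Hp]. destruct IH as [S' HS']; [intros; apply H; simpl; auto|].
 exists (p :: S'). cbn [map]. rewrite Hp, HS'. reflexivity. Qed.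

Lemma zsum_map2 S : zsum (map (Z.mul 2) S) = 2 * zsum S.
Proof. unfold zsum in *. induction S; cbn [map fold_right]; auto. rewrite IHS. lia. Qed.

Lemma inj2 : Injective (Z.mul 2).
Proof. intros x y H. lia. Qed.

Lemma in_map2 z S : In (2*z) (map (Z.mul 2) S) <-> In z S.
Proof. rewrite in_map_iff. split.
 - intros [y [Hy Hi]]. assert (y = z) by lia. subst; auto.
 - intros; exists z; auto. Qed.

Lemma halve B (hB : is_basis B) o (Ho : B o) (Oo : Z.Odd o)
  (Hu : forall c, B c -> Z.Odd c -> c = o) : is_basis (fun c => B (2*c)).
Proof. intros x. split.
 - destruct (proj1 (hB (2*x))) as [S [H1 [H2 H3]]].
   assert (Ev : forall c, In c S -> Z.Even c).
   { intros c Hc. destruct (Z.Even_or_Odd c) as [|Oc]; auto. exfalso.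
     assert (c = o) by (apply Hu; auto). subst c.
     rewrite (zsum_remove S o H1 Hc) in H3.
     assert (Z.Even (zsum (remove Z.eq_dec o S))).
     { apply zsum_even. intros d Hd. apply in_remove in Hd as [Hd Hne].
       destruct (Z.Even_or_Odd d) as [|Od]; auto. exfalso; apply Hne, Hu; auto. }
     destruct H as [p Hp]. destruct Oo as [q Hq]. lia. }
   destruct (even_map S Ev) as [S' ->]. exists S'. split; [|split].
   + eapply NoDup_map_inv; eauto.
   + intros b Hb. apply H2. apply in_map2; auto.
   + rewrite zsum_map2 in H3. lia.
 - intros S T [S1 [S2 S3]] [T1 [T2 T3]] b.
   assert (R1 : represents B (map (Z.mul 2) S) (2*x)).
   { split; [apply Injective_map_NoDup; auto; apply inj2|split].
     - intros c Hc. apply in_map_iff in Hc as [y [<- Hy]]. auto.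
     - rewrite zsum_map2; lia. }
   assert (R2 : represents B (map (Z.mul 2) T) (2*x)).
   { split; [apply Injective_map_NoDup; auto; apply inj2|split].
     - intros c Hc. apply in_map_iff in Hc as [y [<- Hy]]. auto.
     - rewrite zsum_map2; lia. }
   rewrite <- (in_map2 b S), <- (in_map2 b T). apply (rep_uniq B hB _ _ _ R1 R2). Qed.

Definition Pval (B : Z -> Prop) (i : nat) (d : Z) :=
  Z.Odd d /\ B (2 ^ Z.of_nat i * d) /\ forall d', Z.Odd d' -> B (2 ^ Z.of_nat i * d') -> d' = d.

Lemma Pall i : forall B, is_basis B -> exists d, Pval B i d.
Proof. induction i as [|i IH]; intros B hB.
 - destruct (basis_odd B hB) as [o [Ho Oo]]. exists o. simpl. split; [auto|split].
   + rewrite Z.mul_1_l; auto.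
   + intros d' Od Hd. rewrite Z.mul_1_l in Hd. apply (odd_unique B hB); auto.
 - destruct (basis_odd B hB) as [o [Ho Oo]].
   assert (Hu : forall c, B c -> Z.Odd c -> c = o) by (intros; apply (odd_unique B hB); auto).
   destruct (IH _ (halve B hB o Ho Oo Hu)) as [d [Od [Hd Hdu]]].
   assert (E : forall z, 2 ^ Z.of_nat (S i) * z = 2 * (2 ^ Z.of_nat i * z)).
   { intros z. rewrite Nat2Z.inj_succ, Z.pow_succ_r by lia. ring. }
   exists d. split; [auto|split].
   + rewrite E. exact Hd.
   + intros d' Od' Hd'. rewrite E in Hd'. apply Hdu; auto.
Qed.

Lemma decomp2 n : forall b, (Z.abs_nat b <= n)%nat -> b <> 0 ->
  exists i m, Z.Odd m /\ b = 2 ^ Z.of_nat i * m.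
Proof. induction n as [|n IH]; intros b Hb Hn.
 - exfalso. lia.
 - destruct (Z.Even_or_Odd b) as [[c Hc]|Ob].
   + destruct (IH c ltac:(lia) ltac:(lia)) as [i [m [Om Em]]].
     exists (S i), m. split; auto. rewrite Nat2Z.inj_succ, Z.pow_succ_r by lia. rewrite Hc, Em; ring.
   + exists O, b. split; auto. change (Z.of_nat 0) with 0; rewrite Z.pow_0_r; lia. Qed.

Theorem mainTheorem8 (B : Z -> Prop) (hB : is_basis B) :
  exists d : nat -> Z,
    (forall i : nat, Z.Odd (d i)) /\
    (forall b : Z, B b <-> exists i : nat, b = 2 ^ (Z.of_nat i) * d i).
Proof.
  set (d := fun i => proj1_sig (constructive_indefinite_description _ (Pall i B hB))).
  assert (Hd : forall i, Pval B i (d i)) by (intros i; unfold d; apply proj2_sig).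
  exists d. split.
  - intros i. apply (Hd i).
  - intros b. split.
    + intros Hb. assert (b <> 0) by (intro; subst; apply (basis_no0 B hB); auto).
      destruct (decomp2 (Z.abs_nat b) b (le_n _) H) as [i [m [Om Em]]].
      exists i. rewrite Em. f_equal. destruct (Hd i) as [_ [_ U]]. apply U; auto. rewrite <- Em; auto.
    + intros [i ->]. apply (Hd i).
Qed.
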